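(* Let $G$ be a layered group acting on the binary tree. Then $G$ is saturated.
   Context: The binary tree is $\mathcal T=X^*$ with $X=\{0,1\}$; $W$ is its isometry group. For $v\in X^*$ and $g\in W$, $v*g$ is the isometry acting as $g$ on the subtree $v\mathcal T$ (i.e. $(vw)^{v*g}=vw^g$) and fixing other vertices, and $g@v$ is the state of $g$ at $v$, i.e. $(vw)^g=v^g w^{g@v}$. $G\le W$ is level-transitive if it is transitive on $X^n$ for all $n$, and layered if it is level-transitive and $x*G\le G$ for all $x\in X$. $G$ is saturated if for every $n\in\mathbb N$ it contains a characteristic subgroup $H_n$ fixing every vertex of $X^n$ and such that $\{h@v:h\in H_n\}$ is level-transitive for every $v\in X^n$. *)

(* Defs.v *)
(* Binary tree T = X^* with X = bool, vertices
   are sequences of booleans; isometries are level-preserving, prefix-preserving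
   bijections of the vertex set, acting on the right: v^g = g v. *)
From mathcomp Require Import all_boot.
Set Implicit Arguments. Unset Strict Implicit. Unset Printing Implicit Defensive.

Definition vertex := seq bool.
Definition tmap := vertex -> vertex.

Definition is_isom (g : tmap) : Prop :=
  [/\ (forall v, size (g v) = size v),
      (forall v n, g (take n v) = take n (g v)) &
      bijective g].

(* right action: v^(g h) = (v^g)^h *)
Definition tmul (g h : tmap) : tmap := fun v => h (g v).
Definition tid : tmap := id.

Definition subgroup_W (G : tmap -> Prop) : Prop :=
  [/\ (forall g, G g -> is_isom g),
      G tid,
      (forall g h, G g -> G h -> G (tmul g h)) &
      (forall g, G g -> exists2 h, G h & tmul g h = tid /\ tmul h g = tid)].

Definition subgroup_of (H G : tmap -> Prop) : Prop :=
  [/\ (forall h, H h -> G h),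
      H tid,
      (forall g h, H g -> H h -> H (tmul g h)) &
      (forall g, H g -> exists2 h, H h & tmul g h = tid /\ tmul h g = tid)].

Definition group_aut (G : tmap -> Prop) (phi : tmap -> tmap) : Prop :=
  [/\ (forall g, G g -> G (phi g)),
      (forall g h, G g -> G h -> phi g = phi h -> g = h),
      (forall h, G h -> exists2 g, G g & phi g = h) &
      (forall g h, G g -> G h -> phi (tmul g h) = tmul (phi g) (phi h))].

Definition characteristic (H G : tmap -> Prop) : Prop :=
  subgroup_of H G /\
  forall phi, group_aut G phi -> forall g, G g -> (H (phi g) <-> H g).

Definition vsec (v : vertex) (g : tmap) : tmap :=
  fun u => if v == take (size v) u then v ++ g (drop (size v) u) else u.

(* g @ v : the state (section) of g at v: (v w)^g = v^g w^(g@v) *)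
Definition state (g : tmap) (v : vertex) : tmap :=
  fun w => drop (size v) (g (v ++ w)).

Definition level_transitive (G : tmap -> Prop) : Prop :=
  forall (n : nat) (u w : vertex), size u = n -> size w = n ->
    exists2 g, G g & g u = w.

Definition layered (G : tmap -> Prop) : Prop :=
  level_transitive G /\ forall (x : bool) g, G g -> G (vsec [:: x] g).

Definition saturated (G : tmap -> Prop) : Prop :=
  forall n : nat, exists H : tmap -> Prop,
    [/\ characteristic H G,
        (forall h v, H h -> size v = n -> h v = v) &
        (forall v, size v = n -> level_transitive (fun f => exists2 h, H h & f = state h v))].

(* Main.v *)
Require Import Defs.
From mathcomp Require Import all_boot.
From mathcomp Require Import zify.
From Stdlib Require Import FunctionalExtensionality.
Set Implicit Arguments. Unset Strict Implicit. Unset Printing Implicit Defensive.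

Definition tiso (f : tmap) : Prop :=
  [/\ (forall v, size (f v) = size v), (forall v n, f (take n v) = take n (f v)) & injective f].

Lemma isom_tiso g : is_isom g -> tiso g.
Proof. by case=> h1 h2 h3; split => //; exact: bij_inj. Qed.

Lemma tiso_mul f g : tiso f -> tiso g -> tiso (tmul f g).
Proof.
case=> f1 f2 f3 [g1 g2 g3]; split; rewrite /tmul.
- by move=> v; rewrite g1 f1.
- by move=> v n; rewrite f2 g2.
- by move=> x y /g3 /f3.
Qed.

Lemma tiso_id : tiso tid.
Proof. by split. Qed.

Lemma tiso_iter k f : tiso f -> tiso (iter k f).
Proof.
move=> [f1 f2 f3]; elim: k => [|k [h1 h2 h3]]; first by split.
split.
- by move=> v /=; rewrite f1 h1.
- by move=> v n /=; rewrite h2 f2.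
- by move=> x y /= /f3 /h3.
Qed.

Lemma decomp f v w : tiso f -> f (v ++ w) = f v ++ state f v w.
Proof.
case=> f1 f2 _; rewrite /state.
have -> : f v = take (size v) (f (v ++ w)) by rewrite -f2 take_size_cat.
by rewrite cat_take_drop.
Qed.

Lemma tiso_state f v : tiso f -> tiso (state f v).
Proof.
move=> hf; have [f1 f2 f3] := hf; split; rewrite /state.
- by move=> w; rewrite size_drop f1 size_cat addKn.
- move=> w n.
  have -> : v ++ take n w = take (n + size v) (v ++ w).
    by rewrite take_cat ltnNge leq_addl /= addnK.
  by rewrite f2 take_drop.
- move=> x y e.
  have : f (v ++ x) = f (v ++ y).
    by rewrite (decomp _ _ hf) (decomp _ _ hf); congr (_ ++ _).
  by move/f3/eqP; rewrite eqseq_cat // eqxx /= => /eqP.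
Qed.

Lemma vsec_in v g w : vsec v g (v ++ w) = v ++ g w.
Proof. by rewrite /vsec take_size_cat // drop_size_cat // eqxx. Qed.

Lemma vsec_out v g u : v != take (size v) u -> vsec v g u = u.
Proof. by rewrite /vsec => /negbTE ->. Qed.

Lemma vsec_nil g : vsec [::] g = g.
Proof. by apply: functional_extensionality => u; rewrite /vsec take0 drop0. Qed.

Lemma vsec_cons x v g : vsec (x :: v) g = vsec [:: x] (vsec v g).
Proof.
apply: functional_extensionality => u; case: u => [|y u]; first by rewrite /vsec.
rewrite /vsec /= drop0 take0 !eqseq_cons eqxx andbT.
case: eqP => [->|] //=; by case: ifP.
Qed.

Lemma G_vsec G v g : layered G -> G g -> G (vsec v g).
Proof.
move=> [_ HL] Hg; elim: v => [|x v IH]; first by rewrite vsec_nil.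
by rewrite vsec_cons; apply: HL.
Qed.

Fixpoint tpow (g : tmap) (k : nat) : tmap :=
  if k is k'.+1 then tmul g (tpow g k') else tid.

Lemma tpow_iter g k z : tpow g k z = iter k g z.
Proof. elim: k z => [|k IH] z //=. rewrite /tmul IH. by rewrite -iterSr. Qed.

Lemma tpowSr g k : tpow g k.+1 = tmul (tpow g k) g.
Proof.
by apply: functional_extensionality => z; rewrite /tmul !tpow_iter iterS.
Qed.

Lemma tpow_inv a a' k : tmul a a' = tid -> tmul (tpow a k) (tpow a' k) = tid.
Proof.
move=> E; elim: k => [//|k IH].
rewrite (tpowSr a k).
change (tmul (tpow a k) (tmul (tmul a a') (tpow a' k)) = tid).
by rewrite E.
Qed.

Lemma tpow_G G g k : subgroup_W G -> G g -> G (tpow g k).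
Proof.
case=> _ H1 H2 _ Hg; elim: k => [//|k IH] /=; exact: H2.
Qed.


Inductive Hgen (G : tmap -> Prop) (N : nat) : tmap -> Prop :=
| Hg0 : Hgen G N tid
| HgS g x : G g -> Hgen G N x -> Hgen G N (tmul (tpow g N) x).


Lemma Hgen_G {G : tmap -> Prop} {N : nat} (HG : subgroup_W G) x : Hgen G N x -> G x.
Proof.
have [_ H1 H2 _] := HG.
elim=> [//|g y Hg _ IH]; apply: H2 => //; exact: tpow_G.
Qed.

Lemma Hgen_mul {G : tmap -> Prop} {N : nat} (HG : subgroup_W G) x y : Hgen G N x -> Hgen G N y -> Hgen G N (tmul x y).
Proof.
move=> Hx Hy; elim: Hx => [//|g z Hg _ IH]; exact: HgS Hg IH.
Qed.

Lemma Hgen_inv {G : tmap -> Prop} {N : nat} (HG : subgroup_W G) y : Hgen G N y ->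
  exists2 h, Hgen G N h & tmul y h = tid /\ tmul h y = tid.
Proof.
have [_ _ _ H3] := HG.
elim=> [|a x Ha _ [x' Hx' [E1 E2]]]; first by exists tid => //; exact: Hg0.
have [a' Ha' [F1 F2]] := H3 _ Ha.
exists (tmul x' (tpow a' N)).
  exact (Hgen_mul HG Hx' (HgS Ha' (Hg0 _ _))).
split.
- change (tmul (tpow a N) (tmul (tmul x x') (tpow a' N)) = tid).
  rewrite E1; exact: tpow_inv.
- change (tmul x' (tmul (tmul (tpow a' N) (tpow a N)) x) = tid).
  by rewrite tpow_inv.
Qed.

Lemma aut_id {G : tmap -> Prop} (HG : subgroup_W G) phi : group_aut G phi -> phi tid = tid.
Proof.
have [_ H1 _ H3] := HG.
case=> C I S M.
have E : tmul (phi tid) (phi tid) = phi tid by rewrite -M.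
have [p' _ [P1 _]] := H3 _ (C _ H1).
transitivity (tmul (tmul (phi tid) (phi tid)) p'); last by rewrite E.
change (phi tid = tmul (phi tid) (tmul (phi tid) p')).
by rewrite P1.
Qed.

Lemma aut_pow {G : tmap -> Prop} (HG : subgroup_W G) phi a k : group_aut G phi -> G a -> phi (tpow a k) = tpow (phi a) k.
Proof.
move=> A Ha; have [C I S M] := A.
elim: k => [|k IH] /=; first exact: (aut_id HG A).
by rewrite M // ?IH //; exact: tpow_G.
Qed.

Lemma Hgen_char {G : tmap -> Prop} {N : nat} (HG : subgroup_W G) : characteristic (Hgen G N) G.
Proof.
have [_ H1 H2 H3] := HG.
split.
  split; [exact: (Hgen_G HG) | exact: Hg0 | exact: (Hgen_mul HG) | exact: (Hgen_inv HG)].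
move=> phi A g Hg; have [C I S M] := A; split.
- move=> Hp.
  have pre : forall y, Hgen G N y -> exists2 x, Hgen G N x & phi x = y.
    move=> y0; elim=> [|a y Ha _ [x Hx Ex]]; first by exists tid; [exact: Hg0 | exact: (aut_id HG A)].
    have [b Hb Eb] := S _ Ha.
    exists (tmul (tpow b N) x); first exact: HgS.
    rewrite M; [|exact: tpow_G|exact: (Hgen_G HG Hx)].
    by rewrite (aut_pow HG _ A Hb) Eb Ex.
  have [x Hx Ex] := pre _ Hp.
  by rewrite -(I _ _ (Hgen_G HG Hx) Hg Ex).
- clear Hg; elim=> [|a y Ha Hy IH]; first by rewrite (aut_id HG A); exact: Hg0.
  rewrite M; [|exact: tpow_G|exact: (Hgen_G HG Hy)].
  rewrite (aut_pow HG _ A Ha); exact: (HgS (C _ Ha) IH).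
Qed.



Lemma split_last (s : seq bool) n : size s = n.+1 -> s = rcons (take n s) (nth false s n).
Proof.
case/lastP: s => [|p b] //; rewrite size_rcons => -[<-].
by rewrite nth_rcons ltnn eqxx -cats1 take_size_cat // cats1.
Qed.

Lemma boolneq (x y : bool) : x != y -> x = ~~ y.
Proof. by case: x; case: y. Qed.

Lemma neq_nb (b : bool) : b != ~~ b.
Proof. by case: b. Qed.

Lemma iter_fixp f n q : tiso f -> size q = n -> iter (2 ^ n) f q = q.
Proof.
move=> hf; elim: n q => [|n IH] q sq.
  case: q sq => // _; have [f1 _ _] := hf; rewrite expn0 /=.
  apply/size0nil; exact: f1.
rewrite expnSr muln2 -addnn iterD.
set F := iter (2 ^ n) f.
have [F1 F2 F3] : tiso F := tiso_iter _ hf.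
have sp : size (take n q) = n by rewrite size_takel // sq.
have key : forall b, exists c, F (rcons (take n q) b) = rcons (take n q) c.
  move=> b; exists (nth false (F (rcons (take n q)  b)) n).
  have s1 : size (F (rcons (take n q) b)) = n.+1 by rewrite F1 size_rcons sp.
  rewrite {1}(split_last s1); congr rcons.
  by rewrite -F2 -cats1 take_size_cat // /F IH.
set p := take n q in sp key *.
have Eq : q = rcons p (nth false q n) by apply: split_last.
set b := nth false q n in Eq *.
rewrite Eq.
have [c Ec] := key b; have [d Ed] := key (~~ b).
rewrite Ec; case: (eqVneq c b) => [cb|ne].
  by rewrite -cb in Ec; rewrite Ec cb.
have cb : c = ~~ b := boolneq ne.
rewrite cb Ed; case: (eqVneq d b) => [->//|nd].
have db : d = ~~ b := boolneq nd.
rewrite cb in Ec; rewrite db in Ed.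
have := F3 _ _ (etrans Ec (esym Ed)).
move/rcons_inj => [] E; have := neq_nb b; rewrite -E eqxx. by [].
Qed.


Lemma Hgen_fix G n h v : subgroup_W G -> Hgen G (2 ^ n) h -> size v = n -> h v = v.
Proof.
move=> [HGi _ _ _] Hh sv; elim: Hh => [//|g x Hg _ IH].
have hg : tiso g by apply: isom_tiso; exact: HGi.
by rewrite /tmul tpow_iter (iter_fixp hg sv).
Qed.

Definition full (f : tmap) n :=
  forall q, size q = n -> forall k, 0 < k < 2 ^ n -> iter k f q != q.

Lemma one_letter f : tiso f -> exists c, forall b, f [:: b] = [:: c (+) b].
Proof.
case=> f1 _ f3.
have h : forall b, exists c, f [:: b] = [:: c].
  move=> b; move: (f1 [:: b]); case: (f [:: b]) => [|c [|? ?]] //; by exists c.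
have [c Ec] := h false; have [d Ed] := h true.
exists c => -[]; last by rewrite Ec addbF.
rewrite Ed addbT; congr [:: _].
apply: boolneq; apply/eqP => dc; rewrite dc in Ed.
by have := f3 _ _ (etrans Ec (esym Ed)).
Qed.

Lemma exists_full G n : subgroup_W G -> layered G ->
  forall r, tiso r -> exists2 g, G g & full (tmul g r) n.
Proof.
move=> HG HL; have [HGi HG1 HGm HGv] := HG.
elim: n => [|n IH] r hr.
  exists tid => // q _ [|k] //; by rewrite expn0 => /andP[_]; rewrite ltnS ltn0.
have [t0 Ht0 Et0] := HL.1 1 [:: false] [:: true] erefl erefl.
have [cr Ecr] := one_letter hr.
have ht0 := isom_tiso (HGi _ Ht0).
have [ct Ect] := one_letter ht0.
have ct1 : ct = true by move: (Ect false); rewrite Et0 addbF => -[].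
have [t Gt Etr] : exists2 t, G t & forall b, tmul t r [:: b] = [:: ~~ b].
  case: cr Ecr => Ecr; [exists tid => // b | exists t0 => // b].
  - by rewrite /tmul /tid /= ?Ect ?ct1 Ecr ?addFb ?addTb.
pose u := tmul t r.
have hu : tiso u := tiso_mul (isom_tiso (HGi _ Gt)) hr.
have Eu : forall b z, u (b :: z) = ~~ b :: state u [:: b] z.
  move=> b z; rewrite -[b :: z]/([:: b] ++ z) (decomp _ _ hu).
  by rewrite /u Etr.
pose r' := tmul (state u [:: false]) (state u [:: true]).
have hr' : tiso r' := tiso_mul (tiso_state _ hu) (tiso_state _ hu).
have [e Ge Fe] := IH r' hr'.
exists (tmul (vsec [:: false] e) t).
  apply: HGm => //; exact: HL.2.
pose f := tmul (tmul (vsec [:: false] e) t) r.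
change (full f n.+1).
have Ef0 : forall p, f (false :: p) = true :: state u [:: false] (e p).
  move=> p; rewrite /f /tmul -[false :: p]/([:: false] ++ p) vsec_in.
  exact: Eu.
have Ef1 : forall z, f (true :: z) = false :: state u [:: true] z.
  move=> z; rewrite /f /tmul vsec_out; last by [].
  exact: Eu.
have Ef2 : forall p, f (f (false :: p)) = false :: r' (e p).
  by move=> p; rewrite Ef0 Ef1.
have Ef2j : forall j p, iter j.*2 f (false :: p) = false :: iter j (tmul e r') p.
  elim=> [|j IHj] p //.
  by rewrite doubleS /= IHj Ef2.
have Ehead : forall k b z, exists z', iter k f (b :: z) = (odd k (+) b) :: z'.
  elim=> [|k IHk] b z; first by exists z.
  have [z' Ez] := IHk b z; rewrite iterS Ez /= addNb.
  case: (odd k (+) b); [rewrite Ef1 | rewrite Ef0]; eexists; reflexivity.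
have Hfalse : forall j p, size p = n -> 0 < j < 2 ^ n -> iter j.*2 f (false :: p) != false :: p.
  move=> j p sp jb; rewrite Ef2j eqseq_cons eqxx /=; exact: Fe.
move=> q sq k /andP[k0 k1].
case: q sq => [|b p] // [sp].
case ok: (odd k).
  have [z' ->] := Ehead k b p; rewrite ok addTb eqseq_cons.
  by case: b.
have kj : k = (k./2).*2 by rewrite -[in LHS](odd_double_half k) ok.
have jb : 0 < k./2 < 2 ^ n.
  move: k0 k1; rewrite kj expnSr -!muln2; lia.
rewrite kj; case: b.
- apply/negP => /eqP E.
  have E2 : iter (k./2).*2 f (f (true :: p)) = f (true :: p).
    by rewrite -iterSr iterS E.
  move: E2; rewrite Ef1 => /eqP; apply/negP; apply: Hfalse => //.
  by have [s1 _ _] := tiso_state [:: true] hu; rewrite s1.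
- exact: Hfalse.
Qed.


Theorem lemma3p8 (G : tmap -> Prop) :
  subgroup_W G -> layered G -> saturated G.
Proof.
move=> HG HL n; have [HGi HG1 HGm HGv] := HG.
exists (Hgen G (2 ^ n)); split.
- exact: Hgen_char.
- move=> h v Hh sv; exact: Hgen_fix Hh sv.
move=> v sv m u w su sw.
have [k Gk Ek] := HL.1 m u w su sw.
have [c Gc Fc'] := exists_full n HG HL tiso_id.
have Fc : full c n := Fc'.
have hc := isom_tiso (HGi _ Gc).
have [c' Gc' [C1 C2]] := HGv _ Gc.
pose s := tmul (vsec v k) c.
have Gs : G s by apply: HGm => //; exact: G_vsec.
pose N := 2 ^ n.
have N0 : 0 < N by rewrite expn_gt0.
have key : forall j, j < N -> iter j.+1 s (v ++ u) = iter j.+1 c (v ++ k u).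
  elim=> [|j IHj] jN.
    by rewrite /= /s /tmul vsec_in.
  rewrite iterS IHj ?(ltnW jN) // /s /tmul vsec_out //.
  have [_ c2 _] := tiso_iter j.+1 hc.
  rewrite -c2 take_size_cat // eq_sym; apply: Fc => //; by rewrite jN.
have key' : iter N s (v ++ u) = iter N c (v ++ k u).
  have := key N.-1; rewrite prednK // => H; apply: H; lia.
exists (state (tmul (tpow s N) (tmul (tpow c' N) tid)) v).
  exists (tmul (tpow s N) (tmul (tpow c' N) tid)) => //.
  exact: HgS Gs (HgS Gc' (Hg0 _ _)).
have inv := congr1 (fun F => F (v ++ k u)) (tpow_inv N C1).
rewrite /state /tmul /tid /= (tpow_iter s) key' -(tpow_iter c).
rewrite /tmul /tid /= in inv; rewrite inv drop_size_cat //.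
Qed.
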